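(* Let $m>n\ge1$ be coprime integers. Define $$\mathcal{A}_{\frac{m}{n}}(q)=q\,\mathcal{N}_{\frac{m}{n}}(q)\mathcal{N}_{\frac{n}{m}}(q)+\mathcal{D}_{\frac{m}{n}}(q)\mathcal{D}_{\frac{n}{m}}(q),$$ $$\mathcal{B}_{\frac{m}{n}}(q)=\mathcal{N}_{\frac{m}{n}}(q)\mathcal{D}_{\frac{n}{m}}(q)-\mathcal{D}_{\frac{m}{n}}(q)\mathcal{N}_{\frac{n}{m}}(q),$$ $$\mathcal{C}_{\frac{m}{n}}(q)=q\,\mathcal{N}_{\frac{m}{n}}(q)^2+\mathcal{D}_{\frac{m}{n}}(q)^2.$$ Then $$\mathcal{A}_{\frac{m}{n}}(q)^2+q\,\mathcal{B}_{\frac{m}{n}}(q)^2=\mathcal{C}_{\frac{m}{n}}(q)\,\mathcal{C}^*_{\frac{m}{n}}(q),$$ where $\mathcal{C}^*_{\frac{m}{n}}(q):=q^{\deg(\mathcal{C}_{\frac{m}{n}})}\,\mathcal{C}_{\frac{m}{n}}(q^{-1})$.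
   Context: The $q$-deformed rationals: $x\mapsto[x]_q$ is the unique map from $\mathbb{Q}\cup\{\infty\}$ to $\mathbb{Q}(q)\cup\{\infty\}$ satisfying $[0]_q=0$, $[x+1]_q=q[x]_q+1$ and $[-1/x]_q=-1/(q[x]_q)$. For positive rational $x$, $\mathcal{N}_x,\mathcal{D}_x\in\mathbb{Z}[q]$ are the numerator and denominator of $[x]_q$: the polynomials with no common divisor in $\mathbb{Z}[q]$ other than $\pm1$ and with positive leading coefficients such that $[x]_q=\mathcal{N}_x/\mathcal{D}_x$. *)

(* Defs.v *)
From HB Require Import structures.
From mathcomp Require Import all_boot all_order all_algebra fraction.
Set Implicit Arguments. Unset Strict Implicit. Unset Printing Implicit Defensive.
Import Order.TTheory GRing.Theory Num.Theory.
Local Open Scope ring_scope.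

Notation Qq := {fraction {poly int}}.
Notation tofracZq := (@FracField.tofrac {poly int}).
Notation "x %:F" := (tofracZq x) : ring_scope.
Definition qq : Qq := ('X : {poly int})%:F.

(* Q u {oo} and Q(q) u {oo} are modelled by option types, None = oo. *)

Definition shiftQ (x : option rat) : option rat :=
  if x is Some r then Some (r + 1) else None.
Definition negrecQ (x : option rat) : option rat :=
  match x with
  | Some r => if r == 0 then None else Some (- r^-1)
  | None => Some 0
  end.
Definition shiftK (y : option Qq) : option Qq :=
  if y is Some r then Some (qq * r + 1) else None.
Definition negrecK (y : option Qq) : option Qq :=
  match y with
  | Some r => if r == 0 then None else Some (- (qq * r)^-1)
  | None => Some 0
  end.

(* f is the q-deformation map x |-> [x]_q *)
Definition is_qdeformation (f : option rat -> option Qq) : Prop :=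
  [/\ f (Some 0) = Some 0,
      forall x, f (shiftQ x) = shiftK (f x)
    & forall x, f (negrecQ x) = negrecK (f x)].

Definition pdvd (d p : {poly int}) : Prop := exists r : {poly int}, p = r * d.
Definition coprime_Zq (p1 p2 : {poly int}) : Prop :=
  forall d, pdvd d p1 -> pdvd d p2 -> d = 1 \/ d = -1.

Definition is_numden (f : option rat -> option Qq) (x : rat) (N D : {poly int}) : Prop :=
  [/\ coprime_Zq N D, 0 < lead_coef N, 0 < lead_coef D,
      D != 0 & f (Some x) = Some (N%:F / D%:F)].

(* Main.v *)
Require Import Defs.
From HB Require Import structures.
From mathcomp Require Import all_boot all_order all_algebra fraction.
From mathcomp Require Import ring lra zify.
Import Order.TTheory GRing.Theory Num.Theory.
Local Open Scope ring_scope.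

Fixpoint g (k m n : nat) : {poly int} * {poly int} * nat :=
  match k with
  | 0%N => (1, 1, 0%N)
  | k'.+1 =>
    if m == n then (1, 1, 0%N)
    else if (n < m)%N then
      let: (P, Q, d) := g k' (m - n) n in ('X * P + Q, Q, d.+1)
    else let: (P, Q, d) := g k' m (n - m) in ('X * P, 'X * P + Q, d.+1)
  end.

Definition ev (p : {poly int}) : Qq := (map_poly (fun c : int => c%:~R : Qq) p).[qq^-1].

Lemma evD p r : ev (p + r) = ev p + ev r.
Proof. by rewrite /ev rmorphD hornerD. Qed.
Lemma evM p r : ev (p * r) = ev p * ev r.
Proof. by rewrite /ev rmorphM hornerM. Qed.
Lemma evN p : ev (- p) = - ev p.
Proof. by rewrite /ev rmorphN hornerN. Qed.
Lemma evX : ev 'X = qq^-1.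
Proof. by rewrite /ev map_polyX hornerX. Qed.
Lemma ev1 : ev 1 = 1.
Proof. by rewrite /ev rmorph1 hornerC. Qed.

Lemma qq_neq0 : qq != 0.
Proof. by rewrite /qq tofrac_eq0 polyX_eq0. Qed.

Lemma g_inv k m n : let: (P, Q, d) := g k m n in
  [/\ size P = d.+1, (size Q <= d.+1)%N, Q.[0] = 1 &
      exists U V, U * P + V * Q = 'X ^+ d].
Proof.
elim: k m n => [|k IH] m n /=.
  split => //; [by rewrite size_poly1 | by rewrite size_poly1 | by rewrite hornerC | by exists 1, 0; ring].
case: eqP => _.
  split => //; [by rewrite size_poly1 | by rewrite size_poly1 | by rewrite hornerC | by exists 1, 0; ring].
case: ltnP => _.
  move: (IH (m - n)%N n); case: (g k (m - n) n) => [[P Q] d] [sP sQ Q0 [U [V e]]].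
  have sXP : size ('X * P) = d.+2 by rewrite mulrC size_mulX -?size_poly_eq0 sP.
  have sXPQ : size ('X * P + Q) = d.+2 by rewrite size_polyDl sXP // ltnS.
  split => //; first by apply: leq_trans sQ _.
  exists U, ('X * V - U); rewrite exprS -e; ring.
move: (IH m (n - m)%N); case: (g k m (n - m)) => [[P Q] d] [sP sQ Q0 [U [V e]]].
have sXP : size ('X * P) = d.+2 by rewrite mulrC size_mulX -?size_poly_eq0 sP.
have sXPQ : size ('X * P + Q) = d.+2 by rewrite size_polyDl sXP // ltnS.
split => //; first by rewrite sXPQ.
  by rewrite hornerD hornerM hornerX mul0r add0r.
exists (U - 'X * V), ('X * V); rewrite exprS -e; ring.
Qed.

Lemma aux1 (F : fieldType) (x a b : F) (d : nat) : x != 0 ->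
  x * (x ^+ d * a) + x ^+ d * b = x * x ^+ d * (x^-1 * b + a).
Proof. move=> h; field; exact: h. Qed.
Lemma aux2 (F : fieldType) (x a b : F) (d : nat) : x != 0 ->
  x * (x ^+ d * a) + x ^+ d * b = x * x ^+ d * (x^-1 * b + a).
Proof. move=> h; field; exact: h. Qed.
Lemma aux3 (F : fieldType) (x a : F) (d : nat) : x != 0 ->
  x ^+ d * a = x * x ^+ d * (x^-1 * a).
Proof. move=> h; field; exact: h. Qed.

Lemma g_rev k m n : let: (P, Q, d) := g k m n in let: (P', Q', d') := g k n m in
  [/\ d' = d, P'%:F = qq ^+ d * ev Q & Q'%:F = qq ^+ d * ev P].
Proof.
have qn := qq_neq0.
elim: k m n => [|k IH] m n /=.
  by split => //; rewrite ev1 expr0 mul1r tofrac1.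
case: (eqVneq m n) => [e|mn].
  by split => //; rewrite ev1 expr0 mul1r tofrac1.
case: ltngtP => // nm; last by rewrite nm eqxx in mn.
  move: (IH (m - n)%N n).
  case: (g k (m - n) n) => [[P Q] d]; case: (g k n (m - n)) => [[P' Q'] d'] [-> e1 e2].
  split => //.
    by rewrite tofracM e1 -/qq exprS mulrA.
  by rewrite tofracD tofracM e1 e2 evD evM evX -/qq exprS aux1.
move: (IH m (n - m)%N).
case: (g k m (n - m)) => [[P Q] d]; case: (g k (n - m) m) => [[P' Q'] d'] [-> e1 e2].
split => //.
  by rewrite tofracD tofracM e1 e2 evD evM evX -/qq exprS aux1.
by rewrite evM evX e2 exprS aux3.
Qed.

Lemma aux4 (F : fieldType) (a c : F) : c != 0 -> a + c != 0 ->
  a / (a + c) = - ((a / c) + 1)^-1 + 1.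
Proof. move=> h1 h2; field; rewrite ?h1 ?h2 //. Qed.
Lemma aux5 (F : fieldType) (x p q : F) : q != 0 ->
  x * (p / q) + 1 = (x * p + q) / q.
Proof. move=> h; field; exact: h. Qed.
Lemma aux6 (F : fieldType) (x p q : F) : x != 0 -> q != 0 -> x * p + q != 0 ->
  x * (- (x * (x * (p / q) + 1))^-1) + 1 = x * p / (x * p + q).
Proof. move=> h1 h2 h3; field; rewrite ?h1 ?h2 ?h3 //. Qed.

Lemma horner0_neq0 (p : {poly int}) : p.[0] = 1 -> p != 0.
Proof. by move=> h; apply/eqP => e; move: h; rewrite e horner0. Qed.

Lemma XPQ_neq0 (P Q : {poly int}) : ('X * P + Q).[0] = 1 -> qq * P%:F + Q%:F != 0.
Proof. move=> h; rewrite /qq -tofracM -tofracD tofrac_eq0; exact: horner0_neq0. Qed.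

Lemma g_f f k m n : is_qdeformation f -> (0 < m)%N -> (0 < n)%N -> (m + n <= k)%N ->
  f (Some (m%:R / n%:R)) = Some ((g k m n).1.1%:F / (g k m n).1.2%:F).
Proof.
move=> [f0 fS fN]; elim: k m n => [|k IH] m n m0 n0 mnk; first by lia.
rewrite /=.
case: (eqVneq m n) => [e|mn].
  subst n; rewrite divff ?pnatr_eq0 -?lt0n // tofrac1 divff ?oner_eq0 //.
  have -> : Some (1 : rat) = shiftQ (Some 0) by rewrite /= add0r.
  by rewrite fS f0 /= mulr0 add0r.
case: ltngtP => // nm; last by rewrite nm eqxx in mn.
  have := IH (m - n)%N n ltac:(lia) n0 ltac:(lia).
  move: (g_inv k (m - n) n).
  case: (g k (m - n) n) => [[P Q] d] [_ _ Q0 _] /= e.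
  have -> : (m%:R / n%:R : rat) = (m - n)%:R / n%:R + 1.
    rewrite natrB ?(ltnW nm) // mulrBl divff ?pnatr_eq0 -?lt0n //; ring.
  have -> : Some ((m - n)%:R / n%:R + 1 : rat) = shiftQ (Some ((m - n)%:R / n%:R)) by [].
  rewrite fS e /= tofracD tofracM -/qq aux5 //.
  by rewrite tofrac_eq0 horner0_neq0.
have := IH m (n - m)%N m0 ltac:(lia) ltac:(lia).
move: (g_inv k m (n - m)).
case: (g k m (n - m)) => [[P Q] d] [_ _ Q0 _] /= e.
have Qn : Q%:F != 0 by rewrite tofrac_eq0 horner0_neq0.
have XPQ : ('X * P + Q).[0] = 1 by rewrite hornerD hornerM hornerX mul0r add0r.
have -> : (m%:R / n%:R : rat) = - ((m%:R / (n - m)%:R) + 1)^-1 + 1.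
  rewrite -aux4 ?pnatr_eq0 -?lt0n ?subn_gt0 // -?natrD ?pnatr_eq0 ?addn_eq0 -?lt0n ?subn_gt0 ?subnKC ?(ltnW nm) //.
  by rewrite (gtn_eqF m0).
have -> : Some (- ((m%:R / (n - m)%:R) + 1)^-1 + 1 : rat) =
  shiftQ (negrecQ (shiftQ (Some (m%:R / (n - m)%:R)))).
  rewrite /= ifF //; apply/negbTE.
  by rewrite gt_eqF // ltr_wpDl ?divr_ge0 ?ler0n ?ltr01.
rewrite fS fN fS e /= ifF.
  rewrite !tofracD !tofracM -/qq /=. rewrite aux6; [by []|exact: qq_neq0|exact: Qn|exact: XPQ_neq0].
rewrite aux5; last exact: Qn.
rewrite mulf_eq0 invr_eq0 (negbTE Qn) orbF; apply/negbTE; exact: XPQ_neq0.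
Qed.

Lemma ident_aux (N D P Q : {poly int}) d W : coprime_Zq N D -> Q.[0] = 1 ->
  N * 'X ^+ d = P * W -> D * 'X ^+ d = Q * W ->
  (N = P /\ D = Q) \/ (N = -P /\ D = -Q).
Proof.
move=> cop Q0; elim: d W => [|d IH] W h1 h2.
  rewrite expr0 mulr1 in h1; rewrite expr0 mulr1 in h2.
  have [eW|eW] := cop W (ex_intro _ P h1) (ex_intro _ Q h2); rewrite eW in h1 h2.
    by left; rewrite h1 h2 !mulr1.
  by right; rewrite h1 h2 !mulrN1.
have W0 : root W 0.
  apply/eqP; move: (congr1 (horner^~ 0) h2).
  by rewrite !hornerM hornerXn Q0 expr0n /= mulr0 mul1r.
have [W1 eW] := factor_theorem _ _ W0.
rewrite subr0 in eW; subst W.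
apply: (IH W1); apply: (mulIf (x := 'X)); rewrite ?polyX_eq0 //.
  by rewrite -mulrA -exprSr h1 mulrA.
by rewrite -mulrA -exprSr h2 mulrA.
Qed.

Lemma ident (N D P Q U V : {poly int}) d : coprime_Zq N D -> Q.[0] = 1 ->
  U * P + V * Q = 'X ^+ d -> N * Q = D * P ->
  (N = P /\ D = Q) \/ (N = -P /\ D = -Q).
Proof.
move=> cop Q0 e h; apply: (@ident_aux N D P Q d (U * N + V * D) cop Q0).
  rewrite -e; transitivity (U * N * P + V * (N * Q)); first ring.
  rewrite h; ring.
rewrite -e; transitivity (U * (D * P) + V * D * Q); first ring.
rewrite -h; ring.
Qed.

Lemma cross_aux (F : fieldType) (a b c d : F) : b != 0 -> d != 0 -> a / b = c / d -> a * d = b * c.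
Proof.
move=> hb hd e; rewrite -[a](divfK hb) e; field; rewrite ?hb ?hd //.
Qed.

Lemma cross (N D P Q : {poly int}) : D != 0 -> Q != 0 ->
  N%:F / D%:F = P%:F / Q%:F -> N * Q = D * P.
Proof.
move=> hD hQ e; apply/eqP; rewrite -tofrac_eq !tofracM; apply/eqP.
apply: cross_aux e; by rewrite tofrac_eq0.
Qed.

Lemma aux7 (F : fieldType) (x a b : F) (d : nat) : x != 0 ->
  x * (x ^+ d * a) ^+ 2 + (x ^+ d * b) ^+ 2 = x ^+ (d + d).+1 * (x^-1 * b ^+ 2 + a ^+ 2).
Proof. move=> h; rewrite [x ^+ (d + d).+1]exprS exprD; field; exact: h. Qed.

Theorem theorem2 (f : option rat -> option Qq) (m n : nat)
    (Nmn Dmn Nnm Dnm : {poly int}) :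
  is_qdeformation f ->
  (1 <= n)%N -> (n < m)%N -> coprime m n ->
  is_numden f (m%:R / n%:R) Nmn Dmn ->
  is_numden f (n%:R / m%:R) Nnm Dnm ->
  let A : {poly int} := 'X * Nmn * Nnm + Dmn * Dnm in
  let B : {poly int} := Nmn * Dnm - Dmn * Nnm in
  let C : {poly int} := 'X * Nmn ^+ 2 + Dmn ^+ 2 in
  let Cstar : Qq := qq ^+ (size C).-1 * (map_poly (fun c : int => c%:~R : Qq) C).[qq^-1] in
  (A ^+ 2 + 'X * B ^+ 2)%:F = C%:F * Cstar.
Proof.
move=> hf n1 nm _ [copA _ _ DA fA] [copB _ _ DB fB].
have m0 : (0 < m)%N by apply: leq_ltn_trans nm.
have e1 := g_f f (m + n)%N m n hf m0 n1 (leqnn _).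
have e2 := g_f f (m + n)%N n m hf n1 m0 ltac:(by rewrite addnC).
move: (g_inv (m + n)%N m n) (g_inv (m + n)%N n m) (g_rev (m + n)%N m n) e1 e2.
case: (g (m + n)%N m n) => [[P Q] d]; case: (g (m + n)%N n m) => [[P' Q'] d'] /=.
move=> [sP sQ Q0 [U [V eUV]]] [_ _ Q0' [U' [V' eUV']]] [_ r1 r2] e1 e2.
have i1 : (Nmn = P /\ Dmn = Q) \/ (Nmn = -P /\ Dmn = -Q).
  apply: (@ident _ _ _ _ _ _ _ copA Q0 eUV); apply: cross => //; first exact: horner0_neq0.
  by move: fA; rewrite e1 => -[].
have i2 : (Nnm = P' /\ Dnm = Q') \/ (Nnm = -P' /\ Dnm = -Q').
  apply: (@ident _ _ _ _ _ _ _ copB Q0' eUV'); apply: cross => //; first exact: horner0_neq0.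
  by move: fB; rewrite e2 => -[].
have eC : 'X * Nmn ^+ 2 + Dmn ^+ 2 = 'X * P ^+ 2 + Q ^+ 2.
  by case: i1 => -[-> ->]; ring.
have eC' : 'X * Nnm ^+ 2 + Dnm ^+ 2 = 'X * P' ^+ 2 + Q' ^+ 2.
  by case: i2 => -[-> ->]; ring.
cbv zeta.
have -> : ('X * Nmn * Nnm + Dmn * Dnm) ^+ 2 + 'X * (Nmn * Dnm - Dmn * Nnm) ^+ 2
   = ('X * Nmn ^+ 2 + Dmn ^+ 2) * ('X * Nnm ^+ 2 + Dnm ^+ 2) by ring.
rewrite tofracM; congr (_ * _).
rewrite eC eC'.
have P0 : P != 0 by rewrite -size_poly_eq0 sP.
have sP2 : size (P ^+ 2) = (d + d).+1.
  by rewrite expr2 size_mul // sP addSn addnS.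
have P20 : P ^+ 2 != 0 by rewrite -size_poly_eq0 sP2.
have sQ2 : (size (Q ^+ 2) <= (d + d).+1)%N.
  rewrite expr2; apply: leq_trans (size_mul_leq _ _) _.
  move: sQ; case: (size Q) => [|s] /= hs; rewrite ?addSn /=; lia.
have sC : size ('X * P ^+ 2 + Q ^+ 2) = (d + d).+2.
  rewrite size_polyDl mulrC size_mulX // sP2 //.
rewrite sC /= -/(ev _) evD !evM evX tofracD !tofracM -/qq r1 r2.
rewrite aux7; [by [] | exact: qq_neq0].
Qed.
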